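(* For every $y>0$, the function $H_a(y)=\Gamma(a,y)/\Gamma(a-1,y)$ is increasing as a function of $a\in\mathbb{R}$.
   Context: $\Gamma(a,y)=\int_y^{\infty} t^{a-1}e^{-t}\,dt$ is the upper incomplete gamma function, defined for all real $a$ when $y>0$. *)

(* Defs.v *)
From Stdlib Require Import Reals.
From Coquelicot Require Import Coquelicot.
Open Scope R_scope.

Definition upper_gamma (a y : R) : R :=
  RInt_gen (fun t => Rpower t (a - 1) * exp (- t))
           (at_point y) (Rbar_locally p_infty).

Definition H (a y : R) : R := upper_gamma a y / upper_gamma (a - 1) y.

(* Main.v *)
From Stdlib Require Import Reals Lra Classical.
Require Import Defs.
From Coquelicot Require Import Coquelicot.
Open Scope R_scope.

Lemma ln_le_sub1 u : 0 < u -> ln u <= u - 1.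
Proof.
  intros Hu. rewrite <- (ln_exp (u - 1)). apply ln_le; [exact Hu|].
  generalize (exp_ineq1_le (u - 1)); lra.
Qed.

Lemma pow_bound (y p : R) : 0 < y -> exists C, forall t, y <= t -> (p - 1) * ln t <= C + t / 2.
Proof.
  intros Hy. destruct (Rle_dec (p - 1) 0) as [Hk|Hk].
  - exists ((p - 1) * ln y). intros t Ht.
    assert (ln y <= ln t) by (apply ln_le; lra).
    assert (0 <= t) by lra. nra.
  - set (k := p - 1) in *. assert (Hk0 : 0 < k) by lra.
    exists (k * ln (2 * k)). intros t Ht.
    assert (Ht0 : 0 < t) by lra.
    replace (ln t) with (ln (2 * k) + ln (t / (2 * k))).
    2:{ rewrite <- ln_mult by (try apply Rdiv_lt_0_compat; lra). f_equal. field. lra. }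
    assert (H1 := ln_le_sub1 (t / (2 * k)) ltac:(apply Rdiv_lt_0_compat; lra)).
    assert (k * ln (t / (2 * k)) <= k * (t / (2 * k) - 1)) by (apply Rmult_le_compat_l; lra).
    assert (k * (t / (2 * k) - 1) = t / 2 - k) by (field; lra).
    nra.
Qed.

Lemma lub_approx (y M : R) (f : R -> R) :
  (forall b, y <= b -> forall b', b <= b' -> f b <= f b') ->
  (forall b, y <= b -> f b <= M) ->
  exists l, (forall b, y <= b -> f b <= l) /\
    forall eps, 0 < eps -> exists b0, y <= b0 /\ forall b, b0 <= b -> Rabs (f b - l) < eps.
Proof.
  intros Hmon HM.
  set (E := fun x => exists b, y <= b /\ x = f b).
  assert (HB : bound E). { exists M. intros x [b [Hb ->]]. now apply HM. }
  assert (HE : exists x, E x). { exists (f y). exists y. split; [lra|reflexivity]. }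
  destruct (completeness E HB HE) as [l [Hub Hlub]].
  exists l. split.
  - intros b Hb. apply Hub. exists b; split; [exact Hb|reflexivity].
  - intros eps Heps.
    destruct (classic (exists b0, y <= b0 /\ l - eps < f b0)) as [[b0 [Hb0 Hf]]|Hn].
    + exists b0. split; [exact Hb0|]. intros b Hb.
      assert (f b0 <= f b) by (apply Hmon; lra).
      assert (f b <= l) by (apply Hub; exists b; split; [lra|reflexivity]).
      apply Rabs_def1; lra.
    + exfalso. assert (l <= l - eps); [|lra].
      apply Hlub. intros x [b [Hb ->]].
      destruct (Rle_dec (f b) (l - eps)) as [|Hc]; [assumption|].
      exfalso; apply Hn; exists b; split; [exact Hb|lra].
Qed.

Section Y.
Variable y : R.
Hypothesis hy : 0 < y.

Lemma gen_of_approx (f : R -> R) l :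
  (forall b, y <= b -> ex_RInt f y b) ->
  (forall eps, 0 < eps -> exists b0, y <= b0 /\ forall b, b0 <= b -> Rabs (RInt f y b - l) < eps) ->
  is_RInt_gen f (at_point y) (Rbar_locally p_infty) l.
Proof.
  intros Hex Happ P [eps HP].
  destruct (Happ eps (cond_pos eps)) as [b0 [Hb0 H]].
  apply (Filter_prod _ _ _ (fun x => x = y) (fun z => b0 < z)).
  - reflexivity.
  - exists b0. auto.
  - intros x z -> Hz. exists (RInt f y z). split.
    + apply (RInt_correct f y z), Hex; lra.
    + apply HP. apply H. lra.
Qed.

Lemma approx_of_gen (f : R -> R) l :
  is_RInt_gen f (at_point y) (Rbar_locally p_infty) l ->
  forall eps, 0 < eps -> exists M, forall z, M < z -> exists v, is_RInt f y z v /\ Rabs (v - l) < eps.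
Proof.
  intros Hg eps Heps.
  destruct (Hg (ball l (mkposreal eps Heps)) (locally_ball _ _)) as [Q R HQ [M HR] HP].
  exists M. intros z Hz. destruct (HP y z HQ (HR z Hz)) as [v [Hv Hb]].
  exists v. split; [exact Hv|exact Hb].
Qed.

Lemma ex_cont (f : R -> R) : (forall t, y <= t -> continuous f t) ->
  forall a b, y <= a -> y <= b -> ex_RInt f a b.
Proof.
  intros Hc a b Ha Hb. apply (@ex_RInt_continuous R_CompleteNormedModule). intros z Hz. apply Hc.
  destruct Hz as [Hz _]. eapply Rle_trans; [|exact Hz]. apply Rmin_glb; lra.
Qed.

Lemma mono (f : R -> R) : (forall t, y <= t -> continuous f t) -> (forall t, y < t -> 0 <= f t) ->
  forall b, y <= b -> forall b', b <= b' -> RInt f y b <= RInt f y b'.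
Proof.
  intros Hc Hp b Hb b' Hb'.
  rewrite <- (RInt_Chasles f y b b') by (apply ex_cont; auto; lra).
  assert (0 <= RInt f b b'). { apply RInt_ge_0; [lra| apply ex_cont; auto; lra |].
    intros x Hx; apply Hp; lra. }
  change (plus (RInt f y b) (RInt f b b')) with (RInt f y b + RInt f b b'). lra.
Qed.

Lemma le_of_gen (f : R -> R) l : is_RInt_gen f (at_point y) (Rbar_locally p_infty) l ->
  (forall t, y <= t -> continuous f t) -> (forall t, y < t -> 0 <= f t) ->
  forall b, y <= b -> RInt f y b <= l.
Proof.
  intros Hg Hc Hp b Hb. destruct (Rle_dec (RInt f y b) l) as [|Hn]; [assumption|exfalso].
  destruct (approx_of_gen f l Hg (RInt f y b - l) ltac:(lra)) as [M HM].
  destruct (HM (Rmax b M + 1) ltac:(generalize (Rmax_r b M); lra)) as [v [Hv Hvl]].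
  apply (@is_RInt_unique R_CompleteNormedModule) in Hv. subst v.
  assert (RInt f y b <= RInt f y (Rmax b M + 1)) by (apply mono; auto; generalize (Rmax_l b M); lra).
  apply Rabs_def2 in Hvl. lra.
Qed.

Definition e (p t : R) := Rpower t (p - 1) * exp (- t).

Lemma cont_e p t : 0 < t -> continuous (e p) t.
Proof. intros Ht. apply (@ex_derive_continuous R_AbsRing R_NormedModule). unfold e, Rpower. auto_derive. lra. Qed.

Lemma e_pos p t : 0 < e p t.
Proof. unfold e, Rpower. apply Rmult_lt_0_compat; apply exp_pos. Qed.

Lemma e_bound p : exists K, forall t, y <= t -> e p t <= K * exp (- t / 2).
Proof.
  destruct (pow_bound y p hy) as [C HC]. exists (exp C). intros t Ht.
  unfold e, Rpower. rewrite <- !exp_plus.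
  assert (Hle : (p - 1) * ln t + - t <= C + - t / 2) by (generalize (HC t Ht); lra).
  destruct Hle as [Hl|Hl]; [left; apply exp_increasing; exact Hl | right; rewrite Hl; reflexivity].
Qed.

Lemma RInt_kexp K b : y <= b -> 0 <= K ->
  RInt (fun t => K * exp (- t / 2)) y b <= 2 * K * exp (- y / 2).
Proof.
  intros Hb HK.
  assert (H : is_RInt (fun t => K * exp (- t / 2)) y b
     (minus ((fun t => -2 * K * exp (- t / 2)) b) ((fun t => -2 * K * exp (- t / 2)) y))).
  { apply (@is_RInt_derive R_CompleteNormedModule (fun t => -2 * K * exp (- t / 2)) (fun t => K * exp (- t / 2)) y b).
    - intros x _. auto_derive. exact I. simpl. unfold Rdiv. replace (- x * / 2) with (- x * / 2)%R by reflexivity. lra.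
    - intros x _. apply (@ex_derive_continuous R_AbsRing R_NormedModule). auto_derive. exact I. }
  apply (@is_RInt_unique R_CompleteNormedModule) in H. rewrite H.
  change (minus ?u ?v) with (u - v).
  assert (0 < exp (- b / 2)) by apply exp_pos. nra.
Qed.

Lemma gamma_is p : is_RInt_gen (e p) (at_point y) (Rbar_locally p_infty) (upper_gamma p y)
   /\ 0 < upper_gamma p y.
Proof.
  assert (Hc : forall t, y <= t -> continuous (e p) t) by (intros; apply cont_e; lra).
  assert (Hp : forall t, y < t -> 0 <= e p t) by (intros; left; apply e_pos).
  destruct (e_bound p) as [K HK].
  assert (HK0 : 0 <= K). { generalize (HK y (Rle_refl _)) (e_pos p y) (exp_pos (- y / 2)). nra. }
  destruct (lub_approx y (2 * K * exp (- y / 2)) (fun b => RInt (e p) y b)) as [l [Hl Happ]].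
  - intros b Hb b' Hb'. apply mono; auto.
  - intros b Hb. eapply Rle_trans; [|apply (RInt_kexp K b Hb HK0)].
    apply RInt_le; [exact Hb| apply ex_cont; auto; lra | |].
    + apply (@ex_RInt_continuous R_CompleteNormedModule). intros z _.
      apply (@ex_derive_continuous R_AbsRing R_NormedModule). auto_derive. exact I.
    + intros x Hx. apply HK. lra.
  - assert (Hg : is_RInt_gen (e p) (at_point y) (Rbar_locally p_infty) l).
    { apply gen_of_approx; [intros b Hb; apply ex_cont; auto; lra | exact Happ]. }
    assert (Hu : upper_gamma p y = l).
    { unfold upper_gamma. apply (is_RInt_gen_unique (e p) l Hg). }
    rewrite Hu. split; [exact Hg|].
    eapply Rlt_le_trans; [|apply (Hl (y + 1)); lra].
    apply RInt_gt_0; [lra| intros; apply e_pos | intros; apply cont_e; lra].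
Qed.
End Y.

Lemma gen_lin y (f g : R -> R) lf lg al be :
  is_RInt_gen f (at_point y) (Rbar_locally p_infty) lf ->
  is_RInt_gen g (at_point y) (Rbar_locally p_infty) lg ->
  is_RInt_gen (fun t => al * f t + be * g t) (at_point y) (Rbar_locally p_infty) (al * lf + be * lg).
Proof.
  intros Hf Hg.
  exact (is_RInt_gen_plus _ _ _ _ (is_RInt_gen_scal _ al _ Hf) (is_RInt_gen_scal _ be _ Hg)).
Qed.

Lemma sign_prod t m c : 0 < t -> 0 < m -> 0 < c -> 0 <= (t - m) * (Rpower t c - Rpower m c).
Proof.
  intros Ht Hm Hc. destruct (Rtotal_order t m) as [H|[H|H]].
  - assert (Rpower t c < Rpower m c) by (apply Rlt_Rpower_l; lra). nra.
  - subst; lra.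
  - assert (Rpower m c < Rpower t c) by (apply Rlt_Rpower_l; lra). nra.
Qed.

Theorem theorem9 (y : R) (hy : 0 < y) :
  forall a b : R, a < b -> H a y < H b y.
Proof.
  intros a b Hab.
  destruct (gamma_is y hy a) as [Ia Pa].
  destruct (gamma_is y hy (a - 1)) as [Ia1 Pa1].
  destruct (gamma_is y hy b) as [Ib Pb].
  destruct (gamma_is y hy (b - 1)) as [Ib1 Pb1].
  set (Ga := upper_gamma a y) in *. set (Ga1 := upper_gamma (a - 1) y) in *.
  set (Gb := upper_gamma b y) in *. set (Gb1 := upper_gamma (b - 1) y) in *.
  set (m := Ga / Ga1). assert (Hm : 0 < m) by (unfold m; apply Rdiv_lt_0_compat; lra).
  set (c := b - a). assert (Hc : 0 < c) by (unfold c; lra).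
  set (mc := Rpower m c).
  assert (I1 := gen_lin y _ _ _ _ 1 (- m) Ib Ib1).
  assert (I2 := gen_lin y _ _ _ _ (- mc) (mc * m) Ia Ia1).
  assert (I := gen_lin y _ _ _ _ 1 1 I1 I2).
  set (h := fun t => 1 * (1 * e b t + - m * e (b - 1) t) + 1 * (- mc * e a t + mc * m * e (a - 1) t)) in I.
  assert (Hh : forall t, 0 < t -> h t = (t - m) * (Rpower t c - mc) * e (a - 1) t).
  { intros t Ht. unfold h, e.
    replace (b - 1) with ((a - 1 - 1) + c + 1) by (unfold c; ring).
    replace (b - 1 - 1) with ((a - 1 - 1) + c) by (unfold c; ring).
    rewrite !Rpower_plus, !Rpower_1 by exact Ht.
    replace (a - 1 - 1 + 1 - 1) with (a - 1 - 1) by ring.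
    replace (a - 1 - 1 + c + 1 - 1) with (a - 1 - 1 + c) by ring.
    replace (a - 1 - 1 + c - 1 + 1) with (a - 1 - 1 + c) by ring.
    rewrite !Rpower_plus.
    replace (Rpower t (a - 1)) with (Rpower t (a - 1 - 1) * t).
    2:{ rewrite <- (Rpower_1 t Ht) at 2. rewrite <- Rpower_plus. f_equal; ring. }
    ring. }
  assert (Hc0 : forall t, y <= t -> continuous h t).
  { intros t Ht. apply (@ex_derive_continuous R_AbsRing R_NormedModule).
    unfold h, e, Rpower. auto_derive. repeat split; lra. }
  assert (Hp0 : forall t, y < t -> 0 <= h t).
  { intros t Ht. rewrite Hh by lra. apply Rmult_le_pos; [apply sign_prod; lra| left; apply e_pos]. }
  set (z0 := Rmax y m + 1).
  assert (Hz0 : y <= z0 /\ m < z0) by (unfold z0; generalize (Rmax_l y m) (Rmax_r y m); lra).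
  assert (Hle := le_of_gen y h _ I Hc0 Hp0 (z0 + 1) ltac:(lra)).
  assert (Hpos : 0 < RInt h y (z0 + 1)).
  { rewrite <- (RInt_Chasles h y z0 (z0 + 1)) by (apply (ex_cont y); auto; lra).
    change (plus ?u ?v) with (u + v).
    assert (0 <= RInt h y z0) by (apply RInt_ge_0; [lra| apply (ex_cont y); auto; lra| intros; apply Hp0; lra]).
    assert (0 < RInt h z0 (z0 + 1)).
    { apply RInt_gt_0; [lra| |intros; apply Hc0; lra].
      intros x Hx. rewrite Hh by lra. apply Rmult_lt_0_compat; [|apply e_pos].
      apply Rmult_lt_0_compat; [lra|]. unfold mc. apply Rlt_minus_pos || idtac.
      assert (Rpower m c < Rpower x c) by (apply Rlt_Rpower_l; lra). lra. }
    lra. }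
  assert (Heq : mc * m * Ga1 = mc * Ga) by (unfold m; field; lra).
  assert (Hkey : 0 < Gb - m * Gb1) by lra.
  unfold H. fold Ga Ga1 Gb. replace (upper_gamma (b - 1) y) with Gb1 by reflexivity. fold m.
  assert (Gb / Gb1 - m = (Gb - m * Gb1) / Gb1) by (field; lra).
  assert (0 < (Gb - m * Gb1) / Gb1) by (apply Rdiv_lt_0_compat; lra). lra.
Qed.
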